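(* Let $a<b$ be real numbers and $\{\mathcal N_x\}_{x\in[a,b]}$ a family of quantum channels. Suppose $x\mapsto\mathcal Q_\leftrightarrow(\mathcal N_x)$ is continuous and strictly decreasing on $[a,b]$, and suppose there are functions $\mathcal Q_{lb}(\mathcal N_x),\mathcal Q_{ub}(\mathcal N_x)$, continuous and strictly increasing in $x\in[a,b]$, with $\mathcal Q_{lb}(\mathcal N_x)\le\mathcal Q(\mathcal N_x)\le\mathcal Q_{ub}(\mathcal N_x)<\mathcal Q_\leftrightarrow(\mathcal N_x)$ for all $x\in[a,b]$ and $\mathcal Q_{lb}(\mathcal N_a)=\mathcal Q_{ub}(\mathcal N_a)$. Then there is a strictly decreasing sequence $(x_n)_{n\in\mathbb N}$ with $a<x_n<b$ for all $n$ such that for all $n<m$: $$\mathcal Q(\mathcal N_{x_m})<\mathcal Q(\mathcal N_{x_n})\quad\text{and}\quad \mathcal Q_\leftrightarrow(\mathcal N_{x_m})>\mathcal Q_\leftrightarrow(\mathcal N_{x_n}).$$ The analogous statement holds with $\mathcal P,\mathcal P_\leftrightarrow$ in place of $\mathcal Q,\mathcal Q_\leftrightarrow$.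
   Context: $\mathcal Q$ denotes the quantum capacity (with free forward classical communication) and $\mathcal Q_\leftrightarrow$ the quantum capacity assisted by free two-way classical communication; $\mathcal P,\mathcal P_\leftrightarrow$ are the corresponding private classical capacities. *)

(* Defs.v *)
From HB Require Import structures.
From mathcomp Require Import all_boot all_order all_algebra.
From mathcomp Require Import all_classical all_reals all_analysis.
Set Implicit Arguments. Unset Strict Implicit. Unset Printing Implicit Defensive.
Import Order.TTheory GRing.Theory Num.Theory.
Local Open Scope ring_scope.

Definition strict_incr_on (R : realType) (a b : R) (f : R -> R) : Prop :=
  {in `[a, b] &, forall x y, x < y -> f x < f y}.

Definition strict_decr_on (R : realType) (a b : R) (f : R -> R) : Prop :=
  {in `[a, b] &, forall x y, x < y -> f y < f x}.

(* Main.v *)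
Require Import Defs.
From HB Require Import structures.
From mathcomp Require Import all_boot all_order all_algebra.
From mathcomp Require Import all_classical all_reals all_analysis.
From mathcomp Require Import lra.
Import Order.TTheory GRing.Theory Num.Theory.
Import numFieldNormedType.Exports.
Local Open Scope classical_set_scope.
Local Open Scope ring_scope.
Lemma step (R : realType) (f g : R -> R) (a b x : R) : a < b ->
  {within `[a, b]%classic, continuous f} ->
  strict_incr_on a b g -> g a = f a -> a < x -> x <= b ->
  exists y, [/\ a < y, y < x & f y < g x].
Proof.
move=> ab cf ig ga ax xb.
have [_ /cvgrPdist_lt cfa _] := (continuous_within_itvP f ab).1 cf.
have ep : 0 < g x - f a.
  rewrite subr_gt0 -ga; apply: ig => //; rewrite in_itv /= ?lexx ?(ltW ab) ?(ltW ax) //.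
have := cfa _ ep.
move=> H.
have H2 : \forall y \near a^'+, [/\ a < y, y < x & `|f a - f y| < g x - f a].
  near=> y; split; near: y; [exact: nbhs_right_gt|exact: nbhs_right_lt|exact: H].
have [y [ay yx hy]] := filter_ex H2.
exists y; split => //.
move: hy; rewrite ltr_norml => /andP[+ _]; lra.
Unshelve. all: end_near.
Qed.
Theorem mainTheorem9 (R : realType) (Chan : Type) (N : R -> Chan)
    (Cap Cap2 Clb Cub : Chan -> R) (a b : R) :
  a < b ->
  {within `[a, b]%classic, continuous (fun x => Cap2 (N x))} ->
  strict_decr_on a b (fun x => Cap2 (N x)) ->
  {within `[a, b]%classic, continuous (fun x => Clb (N x))} ->
  strict_incr_on a b (fun x => Clb (N x)) ->
  {within `[a, b]%classic, continuous (fun x => Cub (N x))} ->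
  strict_incr_on a b (fun x => Cub (N x)) ->
  (forall x, x \in `[a, b] ->
     Clb (N x) <= Cap (N x) /\ Cap (N x) <= Cub (N x) /\ Cub (N x) < Cap2 (N x)) ->
  Clb (N a) = Cub (N a) ->
  exists xs : nat -> R,
    (forall n m : nat, (n < m)%N -> xs m < xs n) /\
    (forall n : nat, a < xs n /\ xs n < b) /\
    (forall n m : nat, (n < m)%N ->
       Cap (N (xs m)) < Cap (N (xs n)) /\ Cap2 (N (xs n)) < Cap2 (N (xs m))).
Proof.
move=> ab _ d2 _ ilb cub iub hc ha.
have [g hg'] : exists g : R -> R, forall x, a < x -> x <= b ->
    [/\ a < g x, g x < x & Cub (N (g x)) < Clb (N x)].
  have H : forall x : R, exists y : R, a < x -> x <= b -> [/\ a < y, y < x & Cub (N y) < Clb (N x)].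
  move=> x; case: (boolP ((a < x) && (x <= b))) => [/andP[ax xb]|hn].
    have [y [ay yx hy]] := @step R (fun x => Cub (N x)) (fun x => Clb (N x)) a b x ab cub ilb ha ax xb.
    by exists y.
  by exists x => ax xb; move: hn; rewrite ax xb.
  have [g Hg] := boolp.choice H; by exists g.
set xs := fun n => iter n g ((a + b) / 2).
have bnd : forall n, a < xs n /\ xs n < b.
  elim=> [|n [h1 h2]] /=; first by split; rewrite /xs /=; lra.
  have [? ? _] := hg' _ h1 (ltW h2); split => //; rewrite /xs /=; lra.
have dec1 : forall n, xs n.+1 < xs n.
  by move=> n; have [h1 h2] := bnd n; have [] := hg' _ h1 (ltW h2).
have decS : forall n k, xs (n + k.+1)%N < xs n.
  move=> n; elim=> [|k IH]; first by rewrite addn1.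
  by rewrite addnS; apply: lt_trans (dec1 _) IH.
have dec : forall n m, (n < m)%N -> xs m < xs n.
  move=> n m nm; have -> : m = (n + (m - n).-1.+1)%N by rewrite prednK ?subn_gt0 // subnKC // ltnW.
  exact: decS.
have inI : forall n, xs n \in `[a, b] by move=> n; have [h1 h2] := bnd n; rewrite in_itv /= !ltW.
exists xs; split => //; split => // n m nm; split; last exact: d2 (dec _ _ nm).
have [h1 h2] := bnd n.
have [_ _ hn] := hg' _ h1 (ltW h2).
have [hlb [_ _]] := hc _ (inI n).
have [_ [hub _]] := hc _ (inI m).
have hle : Cub (N (xs m)) <= Cub (N (xs n.+1)).
  case: (ltngtP n.+1 m) => [lt|gt|->] //.
    by apply: ltW; apply: iub => //; exact: dec.
  by move: gt; rewrite ltnS leqNgt nm.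
rewrite /xs /= in hn.
have : Cub (N (xs n.+1)) < Clb (N (xs n)) by [].
move=> h; apply: (le_lt_trans hub); apply: (le_lt_trans hle); exact: (lt_le_trans h).
Qed.
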